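(* Let $e\ge1$ and let $A$ be the binomial nilpotent $\mathbb{F}_p$-algebra in $e$ variables, i.e. the ideal generated by $x_1,\dots,x_e$ in $\mathbb{F}_p[x_1,\dots,x_e]/(x_1^2,\dots,x_e^2)$; it has dimension $2^e-1$, with basis the nonempty squarefree monomials, and satisfies $A^e\ne0$, $A^{e+1}=0$. Then for every $t$ with $1\le t\le e$ and every $u\in N_t\setminus N_{t-1}$, \[ \dim_{\mathbb{F}_p}(\mathbb{F}_pu+Au)\ge 2^{t-1}. \]
   Context: $N_k=\{a\in A: y_1\cdots y_k a=0\ \forall y_1,\dots,y_k\in A\}$, $N_0=0$. *)

(* Defs.v *)
From HB Require Import structures.
From mathcomp Require Import all_boot all_order all_algebra.
Set Implicit Arguments. Unset Strict Implicit. Unset Printing Implicit Defensive.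
Import GRing.Theory.
Local Open Scope ring_scope.

(* Ambient algebra F_p[x_1..x_e]/(x_1^2,...,x_e^2): an element is a finite
   function from squarefree monomials (subsets S of 'I_e, S <-> prod_{i in S} x_i)
   to F_p, i.e. its coefficient vector.  The codomain is 'F_p^o so that the
   type is canonically an 'F_p-vector space (vectType). *)
Definition bpoly (p e : nat) := {ffun {set 'I_e} -> ('F_p)^o}.

(* Product: x_T * x_U = x_(T u U) if T, U disjoint, and 0 otherwise. *)
Definition bmul (p e : nat) (f g : bpoly p e) : bpoly p e :=
  [ffun S : {set 'I_e} => \sum_(T : {set 'I_e} | T \subset S) f T * g (S :\: T)].

(* The binomial nilpotent algebra A = (x_1,...,x_e): elements with zero
   constant coefficient. *)
Definition inA (p e : nat) (f : bpoly p e) : bool := f set0 == 0.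

Definition inN (p e : nat) (k : nat) (a : bpoly p e) : Prop :=
  inA a /\ forall ys : seq (bpoly p e), size ys = k -> all (@inA p e) ys ->
    foldr (@bmul p e) a ys = 0.

(* A u = { a u | a in A } (a subspace; we take its span to view it as one). *)
Definition Aspan (p e : nat) (u : bpoly p e) : {vspace bpoly p e} :=
  <<[seq bmul a u | a <- enum (@inA p e)]>>%VS.

(* Main.v *)
Require Import Defs.
From HB Require Import structures.
From mathcomp Require Import all_boot all_order all_algebra.
Set Implicit Arguments. Unset Strict Implicit. Unset Printing Implicit Defensive.
Import GRing.Theory.
Local Open Scope ring_scope.

From mathcomp Require Import zify.
Section S.
Variables (p e : nat).
Local Notation B := (bpoly p e).

Definition mono (T : {set 'I_e}) : B := [ffun S => ((S == T)%:R : 'F_p)].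

Lemma bmul_mono T (u : B) S :
  bmul (mono T) u S = if T \subset S then u (S :\: T) else 0.
Proof.
rewrite /bmul ffunE big_mkcond (bigD1 T) //= big1 ?addr0.
  by rewrite ffunE eqxx mul1r; case: ifP.
by move=> T' /negPf nT; rewrite ffunE nT mul0r; case: ifP.
Qed.

Lemma bmul_mono0 (u : B) : bmul (mono set0) u = u.
Proof. by apply/ffunP=> S; rewrite bmul_mono sub0set setD0. Qed.

Lemma bmul_low (y u : B) m : inA y -> (forall S : {set 'I_e}, (#|S| < m)%N -> u S = 0) ->
  forall S : {set 'I_e}, (#|S| < m.+1)%N -> bmul y u S = 0.
Proof.
move=> /eqP y0 hu S hS; rewrite /bmul ffunE big1 // => T TS.
have [->|nT] := eqVneq T set0; first by rewrite y0 mul0r.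
rewrite hu ?mulr0 //.
have h1 : (#|S :\: T| < #|S|)%N.
  by rewrite -(cardsID T S) (setIidPr TS) -[X in (X < _)%N]add0n ltn_add2r card_gt0.
exact: leq_trans h1 hS.
Qed.

Lemma foldr_low (u : B) m ys : all (@inA p e) ys ->
  (forall S : {set 'I_e}, (#|S| < m)%N -> u S = 0) ->
  forall S : {set 'I_e}, (#|S| < m + size ys)%N -> foldr (@bmul p e) u ys S = 0.
Proof.
elim: ys => [|y ys IH] /=; first by move=> _ h S; rewrite addn0; apply: h.
move=> /andP[hy hys] hu S hS; apply: (bmul_low hy (IH hys hu)).
by rewrite addnS in hS.
Qed.
End S.
Arguments mono {p e}.
Lemma scaleE p e (k : 'F_p) (f : bpoly p e) S : (k *: f) S = k * f S.
Proof. by rewrite [LHS]ffunE. Qed.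
Lemma exS0 (p e : nat) (t : nat) (u : bpoly p e)
  (hu : inN t u) (hnu : ~ inN t.-1 u) :
  exists S0 : {set 'I_e}, u S0 != 0 /\ (#|S0| + t.-1 <= e)%N.
Proof.
case: (pickP (fun S : {set 'I_e} => (u S != 0) && (#|S| + t.-1 <= e)%N)).
  by move=> S /andP[h1 h2]; exists S.
move=> none; exfalso; apply: hnu; split; first exact: hu.1.
move=> ys sz hys; apply/ffunP => S; rewrite ffunE.
have := @foldr_low p e u (e.+1 - t.-1) ys hys.
apply.
  move=> S' hS'; have := none S'; rewrite /=.
  have -> : (#|S'| + t.-1 <= e)%N by lia.
  by rewrite andbT => /negbFE/eqP.
have : (#|S| <= e)%N by rewrite -[X in (_ <= X)%N](card_ord e) max_card.
rewrite sz; lia.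
Qed.
Theorem proposition4p3 (p e : nat) (hp : prime p) (he : (1 <= e)%N)
  (t : nat) (ht1 : (1 <= t)%N) (hte : (t <= e)%N) (u : bpoly p e)
  (hu : inN t u) (hnu : ~ inN t.-1 u) :
  (2 ^ t.-1 <= \dim (<[u]> + Aspan u)%VS)%N.
Proof.
have [S0 [uS0 cS0]] := exS0 hu hnu.
set C := ~: S0.
have cC : (t.-1 <= #|C|)%N.
  have := cardsC S0; rewrite card_ord -/C; lia.
set Ts := enum (powerset C).
set X := [seq bmul (mono T) u | T <- Ts].
have TsC : forall T, T \in Ts -> T \subset C.
  by move=> T; rewrite mem_enum powersetE.
have freeX : free X.
  have -> : free X = free (in_tuple X) by []. apply/freeP => k hk.
  have szX : size X = size Ts by rewrite size_map.
  suff H : forall n (i : 'I_(size X)), (#|nth set0 Ts i| < n)%N -> k i = 0.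
    by move=> i; apply: (H (#|nth set0 Ts i|).+1).
  elim=> [//|n IH] i hi.
  have iTs : (i < size Ts)%N by rewrite -szX.
  set Ti := nth set0 Ts i.
  have TiC : Ti \subset C by apply: TsC; apply: mem_nth.
  have := congr1 (fun f : bpoly p e => f (S0 :|: Ti)) hk.
  rewrite sum_ffunE ffunE (bigD1 i) //= big1 ?addr0.
  - rewrite ffunE (nth_map set0) // bmul_mono subsetUr.
    have -> : (S0 :|: Ti) :\: Ti = S0.
      apply/setP=> x; rewrite !inE; case xT: (x \in Ti); rewrite /= ?orbF ?andbT //.
      by have := subsetP TiC x xT; rewrite inE => /negbTE ->.
    by move/eqP; rewrite scaler_eq0 (negbTE uS0) orbF => /eqP.
  move=> j nji; rewrite scaleE.
  have jTs : (j < size Ts)%N by rewrite -szX.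
  rewrite (nth_map set0) // bmul_mono.
  case: ifP => [sub|]; last by rewrite mulr0.
  set Tj := nth set0 Ts j in sub *.
  have TjC : Tj \subset C by apply: TsC; apply: mem_nth.
  have TjTi : Tj \subset Ti.
    apply/subsetP => x xTj.
    have := subsetP sub x xTj; rewrite inE => /orP[xS0|//].
    by have := subsetP TjC x xTj; rewrite inE xS0.
  have neq : Tj != Ti.
    apply: contra nji => eqT.
    by rewrite -val_eqE /= -(nth_uniq set0 jTs iTs (enum_uniq _)).
  have : (#|Tj| < #|Ti|)%N by apply: proper_card; rewrite properEneq neq.
  move=> lt; rewrite (IH j) ?mul0r //; apply: leq_trans lt _; rewrite -ltnS; exact: hi.
have dX : \dim <<X>> = size X by apply/eqP.
have hsub : (<<X>> <= <[u]> + Aspan u)%VS.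
  apply/span_subvP => x /mapP[T TTs ->].
  have [->|nT] := eqVneq T set0.
    by rewrite bmul_mono0; apply: (subvP (addvSl _ _)); apply: memv_line.
  apply: (subvP (addvSr _ _)); apply: memv_span; apply: map_f.
  by rewrite mem_enum unfold_in /inA /mono /= ffunE (eq_sym set0) (negbTE nT).
apply: leq_trans (dimvS hsub); rewrite dX size_map -cardE card_powerset.
by rewrite leq_exp2l.
Qed.
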